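(* For the gossip USD and every $t\ge1$: (1) $\mathbb E_{t-1}[\psi_t]\le\frac{\beta_{t-1}}{n}$. (2) Conditioned on $\mathcal F_{t-1}$, $\psi_t-\mathbb E_{t-1}[\psi_t]$ satisfies the $\big(\frac{24}{n},\frac{400\beta_{t-1}}{n}\big)$-Bernstein condition.
   Context: Vertex set $V$, $|V|=n$; opinions in $\Sigma=[k]\cup\{\bot\}$ ($\bot$ = undecided). USD update rule: $\mathsf{update}(\sigma_1,\sigma_2)=\bot$ if $\sigma_1,\sigma_2\in[k]$ and $\sigma_1\ne\sigma_2$; $=\sigma_2$ if $\sigma_1=\bot$; $=\sigma_1$ otherwise. Gossip USD: given $\mathrm{opn}_t\in\Sigma^V$, every $u\in V$ independently picks $v$ uniformly from $V$ and sets $\mathrm{opn}_{t+1}(u)=\mathsf{update}(\mathrm{opn}_t(u),\mathrm{opn}_t(v))$. Notation: $\alpha_t(i)=|\{u:\mathrm{opn}_t(u)=i\}|/n$, $\beta_t=\sum_{i\in[k]}\alpha_t(i)$, $\gamma_t=\sum_{i\in[k]}\alpha_t(i)^2$, $\psi_t=\beta_t(2\beta_t-1)-\gamma_t$. $(\mathcal F_t)$ is the natural filtration; $\mathbb E_{t-1}$ is conditional expectation given $\mathcal F_{t-1}$. Bernstein condition: for $D,s\ge0$, $X$ satisfies the $(D,s)$-Bernstein condition if $\mathbb E[e^{\lambda X}]\le\exp\!\big(\frac{\lambda^2 s/2}{1-|\lambda|D/3}\big)$ for all real $\lambda$ with $|\lambda|D<3$. Conditioned on $\mathcal F_{t-1}$: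 the same with $\mathbb E_{t-1}$, almost surely. *)

(* Defs.v *)
From HB Require Import structures.
From mathcomp Require Import all_boot all_order all_algebra.
From mathcomp Require Import reals sequences exp.
Set Implicit Arguments. Unset Strict Implicit. Unset Printing Implicit Defensive.
Import Order.TTheory GRing.Theory Num.Theory.
Local Open Scope ring_scope.

Section GossipUSD.
Variables (R : realType) (V : finType) (k : nat).

(* Opinions Sigma = [k] u {bot}: Some i is opinion i, None is undecided. *)
Definition opinion := option 'I_k.
Definition config := {ffun V -> opinion}.
Definition choice := {ffun V -> V}.   (* the samples v picked by every u *)

Definition update (s1 s2 : opinion) : opinion :=
  match s1, s2 with
  | Some i, Some j => if i == j then Some i else None
  | None, _ => s2
  | Some i, None => Some i
  end.

Definition step (c : config) (f : choice) : config :=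
  [ffun u => update (c u) (c (f u))].

Definition nV : R := (#|V|)%:R.
Definition alpha (c : config) (i : 'I_k) : R :=
  (#|[set u | c u == Some i]|)%:R / nV.
Definition beta (c : config) : R := \sum_(i < k) alpha c i.
Definition gamma (c : config) : R := \sum_(i < k) alpha c i ^+ 2.
Definition psi (c : config) : R := beta c * (2 * beta c - 1) - gamma c.

(* Sample space for the first t rounds: the t independent uniform
   choice functions; uniform probability on this finite space. *)
Definition Omega (t : nat) := {ffun 'I_t -> choice}.

Fixpoint opn (c0 : config) (t : nat) (w : Omega t) (s : nat) : config :=
  match s with
  | 0 => c0
  | s'.+1 => match (insub s' : option 'I_t) with
             | Some i => step (opn c0 w s') (w i)
             | None => opn c0 w s'
             end
  end.

(* the atom of F_{s} (natural filtration of opn, times 0..s) containing w *)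
Definition atom (c0 : config) (t s : nat) (w : Omega t) : {set Omega t} :=
  [set w' | [forall j : 'I_s.+1, opn c0 w' j == opn c0 w j]].

(* conditional expectation E[X | F_s] evaluated at w (uniform measure) *)
Definition condE (c0 : config) (t s : nat) (X : Omega t -> R) (w : Omega t) : R :=
  (\sum_(w' in atom c0 s w) X w') / (#|atom c0 s w|)%:R.

End GossipUSD.

Definition bernstein {R : realType} (D s : R) (mgf : R -> R) : Prop :=
  forall lam : R, `|lam| * D < 3 ->
    mgf lam <= expR ((lam ^+ 2 * s / 2) / (1 - `|lam| * D / 3)).

(* Main.v *)
Require Import Defs.
From HB Require Import structures.
From mathcomp Require Import all_boot all_order all_algebra.
From mathcomp Require Import reals sequences exp.
From mathcomp Require Import ring lra.
Import Order.TTheory GRing.Theory Num.Theory.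
Local Open Scope ring_scope.
Set Implicit Arguments. Unset Strict Implicit. Unset Printing Implicit Defensive.


Section Generic.
Variables (R : realType) (I J : finType).
Implicit Types (x f g : {ffun I -> J}).

Definition upd x (u : I) (y : J) : {ffun I -> J} :=
  [ffun v => if v == u then y else x v].

Lemma upd_same x u y : upd x u y u = y.
Proof. by rewrite ffunE eqxx. Qed.
Lemma upd_other x u y v : v != u -> upd x u y v = x v.
Proof. by rewrite ffunE => /negbTE ->. Qed.
Lemma upd_upd x u y z : upd (upd x u y) u z = upd x u z.
Proof. by apply/ffunP=> v; rewrite !ffunE; case: eqP. Qed.
Lemma upd_id x u : upd x u (x u) = x.
Proof. by apply/ffunP=> v; rewrite !ffunE; case: eqP => [->|]. Qed.

Definition swapT u (p : {ffun I -> J} * J) := (upd p.1 u p.2, p.1 u).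
Lemma swapTK u : involutive (swapT u).
Proof. by case=> x y; rewrite /swapT /= upd_upd upd_id upd_same. Qed.

Lemma sum_upd (P : pred {ffun I -> J}) u (F : {ffun I -> J} -> R) :
  (forall x y, P (upd x u y) = P x) ->
  \sum_(x | P x) \sum_(y : J) F (upd x u y) = #|J|%:R * \sum_(x | P x) F x.
Proof.
move=> HP.
rewrite pair_big /= (reindex_inj (inv_inj (swapTK u))) /=.
rewrite (eq_big (fun p : {ffun I -> J} * J => P p.1 && true) (fun p => F p.1)); last 2 first.
- by move=> p; rewrite /= HP.
- by move=> p _; rewrite /= upd_upd upd_id.
rewrite -(pair_big P (fun _ => true) (fun i _ => F i)) mulr_sumr.
apply: eq_bigr => x _; rewrite sumr_const mulr_natl.
by [].

Qed.


Lemma sum_coord (P : pred {ffun I -> J}) u (phi : J -> R) :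
  (forall x y, P (upd x u y) = P x) ->
  #|J|%:R * \sum_(x | P x) phi (x u) = #|P|%:R * \sum_(y : J) phi y.
Proof.
move=> HP; rewrite -(@sum_upd P u (fun x => phi (x u))) //.
under eq_bigr do under eq_bigr do rewrite upd_same.
by rewrite sumr_const mulr_natl.
Qed.

Definition mrg (s : seq I) x f : {ffun I -> J} :=
  [ffun v => if v \in s then x v else f v].
Definition NN : R := #|{ffun I -> J}|%:R.
Definition Es (s : seq I) (F : {ffun I -> J} -> R) f : R :=
  (\sum_x F (mrg s x f)) / NN.

Hypothesis hJ : (0 < #|J|)%N.

Lemma NN_gt0 : 0 < NN.
Proof. by rewrite /NN ltr0n card_ffun expn_gt0 hJ. Qed.
Lemma NN_neq0 : NN != 0.
Proof. by rewrite gt_eqF // NN_gt0. Qed.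
Lemma J_gt0 : 0 < #|J|%:R :> R.
Proof. by rewrite ltr0n. Qed.

Lemma mrg_nil x f : mrg [::] x f = f.
Proof. by apply/ffunP=> v; rewrite ffunE. Qed.
Lemma mrg_merge s x z f : mrg s x (mrg s z f) = mrg s x f.
Proof. by apply/ffunP=> v; rewrite !ffunE; case: (v \in s). Qed.
Lemma mrg_upd_in s x f v y : v \in s -> mrg s x (upd f v y) = mrg s x f.
Proof.
move=> hv; apply/ffunP=> w; rewrite !ffunE.
by case: ifP => // hw; case: eqP => // e; rewrite e hv in hw.
Qed.
Lemma mrg_upd_out s x f u y : u \notin s ->
  mrg s x (upd f u y) = upd (mrg s x f) u y.
Proof.
move=> hu; apply/ffunP=> w; rewrite !ffunE.
by case: eqP => [->|]; [rewrite (negbTE hu)|].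
Qed.
Lemma mrg_cons s x f u y : u \notin s ->
  mrg s x (upd f u y) = mrg (u :: s) (upd x u y) f.
Proof.
move=> hu; apply/ffunP=> w; rewrite !ffunE inE.
case: eqP => [->|ne]; first by rewrite (negbTE hu).
by case: ifP.
Qed.

Lemma Es_nil F f : Es [::] F f = F f.
Proof.
rewrite /Es; under eq_bigr do rewrite mrg_nil.
by rewrite sumr_const -mulr_natr mulfK // NN_neq0.
Qed.

Lemma Es_all s F f : (forall v, v \in s) -> Es s F f = (\sum_x F x) / NN.
Proof.
move=> hs; rewrite /Es; congr (_ / _); apply: eq_bigr => x _.
by congr F; apply/ffunP=> v; rewrite ffunE hs.
Qed.

Lemma Es_merge s F x f : Es s F (mrg s x f) = Es s F f.
Proof. by rewrite /Es; under eq_bigr do rewrite mrg_merge. Qed.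

Lemma Es_cons u s F f : u \notin s ->
  Es (u :: s) F f = (\sum_(y : J) Es s F (upd f u y)) / #|J|%:R.
Proof.
move=> hu; rewrite /Es -mulr_suml exchange_big /=.
under [X in X / NN / _]eq_bigr do under eq_bigr do rewrite mrg_cons //.
rewrite (@sum_upd predT u (fun z => F (mrg (u :: s) z f))) //.
have hj := J_gt0; set S := \sum_(x | predT x) _; rewrite /S; field; rewrite ?NN_neq0 // gt_eqF //.
Qed.

End Generic.


Lemma exp_quad (R : realType) (x : R) : `|x| <= 1/2 -> expR x <= 1 + x + 2 * x ^+ 2.
Proof.
move=> hx.
have hx1 : -(1/2) <= x <= 1/2 by rewrite -ler_norml.
case/andP: hx1 => hxl hxu.
set e := expR (- (x / 2)).
have he : 1 - x / 2 <= e by have := expR_ge1Dx (- (x / 2)); rewrite /e.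
have hE : expR x * (e * e) = 1.
  by rewrite /e -!expRD (_ : x + _ = 0) ?expR0 //; field.
set q := 1 + x + 2 * x ^+ 2.
have hq : 1 <= q * (e * e).
  have h1 : 0 <= 1 - x / 2 by lra.
  have h2 : (1 - x/2) * (1 - x/2) <= e * e by apply: ler_pM.
  have hq0 : 0 <= q by rewrite /q; nra.
  apply: le_trans (ler_wpM2l hq0 h2).
  rewrite /q; nra.
have hE0 := expR_gt0 x.
have : expR x * 1 <= expR x * (q * (e * e)) by rewrite ler_pM2l.
by rewrite mulr1 mulrCA hE mulr1.
Qed.

Section OneCoord.
Variables (R : realType) (J : finType).

Lemma sumJ_const (c : R) : \sum_(y : J) c = c * #|J|%:R.
Proof. by rewrite sumr_const mulr_natr. Qed.

Lemma card_sumR (P : pred J) : \sum_(y : J) (P y)%:R = #|P|%:R :> R.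
Proof.
rewrite -sum1_card natr_sum [RHS]big_mkcond /=.
by apply: eq_bigr => y _; rewrite unfold_in; case: (P y).
Qed.

Lemma one_coord (phi : J -> R) (S : pred J) (d : J) (L lam : R) :
  (0 < #|J|)%N -> S d ->
  (forall x y, `|phi x - phi y| <= L) -> (forall x, S x -> phi x = phi d) ->
  `|lam| * L <= 1/2 ->
  (\sum_y expR (lam * (phi y - (\sum_z phi z) / #|J|%:R))) / #|J|%:R
     <= expR (2 * lam ^+ 2 * L ^+ 2 * (#|[predC S]|%:R / #|J|%:R)).
Proof.
move=> hJ hSd hL hS hlam.
have hn : 0 < #|J|%:R :> R by rewrite ltr0n.
set n : R := #|J|%:R in hn *.
set mu := (\sum_z phi z) / n.
have hni : 0 < n^-1 by rewrite invr_gt0.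
have hL0 : 0 <= L by apply: le_trans (hL d d); rewrite normr_ge0.
have hZ y : `|phi y - mu| <= L.
  have -> : phi y - mu = (\sum_z (phi y - phi z)) / n.
    rewrite sumrB sumJ_const /mu -/n; field; by rewrite gt_eqF.
  rewrite normrM (gtr0_norm hni) ler_pdivrMr //.
  apply: le_trans (ler_norm_sum _ _ _) _.
  by rewrite -sumJ_const; apply: ler_sum => z _; apply: hL.
have hsZ : \sum_y (phi y - mu) = 0.
  rewrite sumrB sumJ_const /mu -/n; field; by rewrite gt_eqF.
have hZ2 : \sum_y (phi y - mu) ^+ 2 <= L ^+ 2 * #|[predC S]|%:R.
  apply: (@le_trans _ _ (\sum_y (phi y - phi d) ^+ 2)).
    have -> : \sum_y (phi y - phi d) ^+ 2 = \sum_y (phi y - mu) ^+ 2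
        + 2 * (mu - phi d) * \sum_y (phi y - mu) + (mu - phi d) ^+ 2 * n.
      rewrite -sumJ_const mulr_sumr -!big_split /=.
      by apply: eq_bigr => y _; ring.
    by rewrite hsZ mulr0 addr0 lerDl mulr_ge0 // ?sqr_ge0 // ltW.
  rewrite -card_sumR mulr_sumr; apply: ler_sum => y _.
  rewrite /= unfold_in /=; case hy: (S y) => /=.
    by rewrite hS // subrr expr0n mulr0.
  have h := hL y d; have h0 := normr_ge0 (phi y - phi d).
  rewrite mulr1 -(real_normK (num_real (phi y - phi d))); nra.
have hexp : \sum_y expR (lam * (phi y - mu)) <=
   \sum_y (1 + lam * (phi y - mu) + 2 * (lam * (phi y - mu)) ^+ 2).
  apply: ler_sum => y _; apply: exp_quad.
  rewrite normrM; apply: le_trans hlam.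
  by apply: ler_wpM2l => //; apply: hZ.
have E1 : \sum_y (1 + lam * (phi y - mu) + 2 * (lam * (phi y - mu)) ^+ 2)
   = n + lam * \sum_y (phi y - mu) + 2 * lam ^+ 2 * \sum_y (phi y - mu) ^+ 2.
  rewrite big_split /= [X in X + _ = _]big_split /= sumJ_const mul1r !mulr_sumr.
  by congr (_ + _ + _); apply: eq_bigr => y _; ring.
rewrite E1 hsZ mulr0 addr0 in hexp.
apply: le_trans (expR_ge1Dx _).
rewrite ler_pdivrMr //; apply: (le_trans hexp).
have hl2 : 0 <= 2 * lam ^+ 2 by rewrite mulr_ge0 // sqr_ge0.
have -> : (1 + 2 * lam ^+ 2 * L ^+ 2 * (#|[predC S]|%:R / n)) * n
   = n + 2 * lam ^+ 2 * (L ^+ 2 * #|[predC S]|%:R).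
  by field; rewrite gt_eqF.
by rewrite lerD2l; apply: ler_wpM2l.
Qed.
End OneCoord.


Section MGF.
Variables (R : realType) (I J : finType).
Hypothesis hJ : (0 < #|J|)%N.

Lemma Es_ext s (F1 F2 : {ffun I -> J} -> R) f :
  (forall x, F1 (mrg s x f) = F2 (mrg s x f)) -> Es s F1 f = Es s F2 f.
Proof. by move=> h; rewrite /Es; congr (_ / _); apply: eq_bigr => x _. Qed.

Lemma Es_mulC s (F c : {ffun I -> J} -> R) f :
  (forall x, c (mrg s x f) = c f) ->
  Es s (fun g => c g * F g) f = c f * Es s F f.
Proof.
move=> h; rewrite /Es mulrA mulr_sumr; congr (_ / _).
by apply: eq_bigr => x _; rewrite h.
Qed.

Lemma Es_le s (F1 F2 : {ffun I -> J} -> R) f :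
  (forall g, F1 g <= F2 g) -> Es s F1 f <= Es s F2 f.
Proof.
move=> h; rewrite /Es ler_pM2r ?invr_gt0 ?NN_gt0 //.
by apply: ler_sum => x _.
Qed.

Variables (G : {ffun I -> J} -> R) (S : I -> pred J) (d : I -> J) (L lam : R).
Hypothesis hSd : forall u, S u (d u).
Hypothesis hG : forall f u x y, `|G (upd f u x) - G (upd f u y)| <= L.
Hypothesis hGS : forall f u x, S u x -> G (upd f u x) = G (upd f u (d u)).
Hypothesis hlam : `|lam| * L <= 1/2.

Let K := 2 * lam ^+ 2 * L ^+ 2.
Let p u := #|[predC S u]|%:R / #|J|%:R : R.

Lemma mgf_step s : uniq s -> forall f,
  Es s (fun g => expR (lam * (G g - Es s G g))) f <= expR (K * \sum_(u <- s) p u).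
Proof.
elim: s => [|u s IH] /= hs f.
  by rewrite Es_nil // Es_nil // subrr mulr0 big_nil mulr0.
case/andP: hs => hu hs.
rewrite Es_cons //.
set H := Es s G.
set mu := Es (u :: s) G f.
have hmu : mu = (\sum_y H (upd f u y)) / #|J|%:R by rewrite /mu Es_cons.
have hstep y : Es s (fun g => expR (lam * (G g - Es (u :: s) G g))) (upd f u y)
     = expR (lam * (H (upd f u y) - mu)) *
       Es s (fun g => expR (lam * (G g - H g))) (upd f u y).
  rewrite -(@Es_mulC s (fun g => expR (lam * (G g - H g)))
                       (fun g => expR (lam * (H g - mu)))); last first.
    by move=> x; rewrite /H Es_merge.
  apply: Es_ext => x.
  rewrite mrg_cons // Es_merge -/mu -mrg_cons // -expRD; congr expR; ring.
rewrite (eq_bigr _ (fun y _ => hstep y)).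
have hIH y : expR (lam * (H (upd f u y) - mu)) *
       Es s (fun g => expR (lam * (G g - H g))) (upd f u y)
    <= expR (lam * (H (upd f u y) - mu)) * expR (K * \sum_(v <- s) p v).
  by rewrite ler_pM2l ?expR_gt0 //; apply: IH.
apply: (le_trans (y := (\sum_y expR (lam * (H (upd f u y) - mu)) *
         expR (K * \sum_(v <- s) p v)) / #|J|%:R)).
  by rewrite ler_pM2r ?invr_gt0 ?ltr0n //; apply: ler_sum => y _; apply: hIH.
rewrite -mulr_suml mulrAC big_cons mulrDr expRD ler_pM2r ?expR_gt0 //.
rewrite hmu.
apply: (@one_coord R J (fun y => H (upd f u y)) (S u) (d u) L lam hJ (hSd u)) => //.
- move=> x y; rewrite /H /Es -mulrBl normrM (gtr0_norm (_ : 0 < (NN R I J)^-1));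
    last by rewrite invr_gt0 NN_gt0.
  rewrite -sumrB ler_pdivrMr ?NN_gt0 //.
  apply: le_trans (ler_norm_sum _ _ _) _.
  rewrite /NN -sumJ_const; apply: ler_sum => z _.
  by rewrite !mrg_upd_out.
- move=> x hx; rewrite /H /Es; congr (_ / _); apply: eq_bigr => z _.
  by rewrite !mrg_upd_out // hGS.
Qed.

Lemma mgf_bd :
  (\sum_g expR (lam * (G g - (\sum_h G h) / NN R I J))) / NN R I J
    <= expR (K * \sum_u p u).
Proof.
have := mgf_step (enum_uniq (mem I)) [ffun u => d u].
have hall : forall v, v \in enum (mem I) by move=> v; rewrite mem_enum.
rewrite Es_all //.
under eq_bigr do rewrite Es_all //.
by rewrite big_enum.
Qed.
End MGF.


Section Opinions.
Variables (R : realType) (k : nat).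

Definition dd (o : opinion k) : R := if o is Some _ then 1 else 0.
Definition ee (i : 'I_k) (o : opinion k) : R := if o == Some i then 1 else 0.
Definition un (o : opinion k) : R := if o is None then 1 else 0.
Definition hh (o o' : opinion k) : R :=
  2 * dd o * dd o' - dd o - \sum_i ee i o * ee i o'.

Lemma sum_ee o : \sum_i ee i o = dd o.
Proof.
case: o => [a|]; rewrite /dd /ee /=.
  rewrite (bigD1 a) //= eqxx big1 ?addr0 // => i hi.
  by rewrite (_ : (Some a == Some i) = false) //; apply/negbTE; rewrite eq_sym.
by rewrite big1.
Qed.

Lemma sum_eeS a o : \sum_i ee i (Some a) * ee i o = ee a o.
Proof.
rewrite (bigD1 a) //= /ee eqxx mul1r big1 ?addr0 // => i hi.
by rewrite (_ : (Some a == Some i) = false) ?mul0r //; apply/negbTE; rewrite eq_sym.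
Qed.

Lemma sum_eeN o : \sum_i ee i None * ee i o = 0.
Proof. by rewrite big1 // => i _; rewrite /ee mul0r. Qed.

Lemma hh_diag o : hh o o = 0.
Proof.
rewrite /hh; case: o => [a|]; last by rewrite sum_eeN /dd /= !mulr0 !subr0.
rewrite sum_eeS /dd /ee /= eqxx; ring.
Qed.

Lemma hh_bound o o' : `|hh o o'| <= 1.
Proof.
rewrite /hh; case: o => [a|]; last by rewrite sum_eeN /dd /= mulr0 !mul0r !subr0 normr0.
rewrite sum_eeS /dd /ee /=; case: o' => [b|] /=.
  case: (Some b == Some a).
    by rewrite (_ : 2 * 1 * 1 - 1 - 1 = 0 :> R) ?normr0 //; ring.
  by rewrite (_ : 2 * 1 * 1 - 1 - 0 = 1 :> R) ?normr1 //; ring.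
by rewrite (_ : 2 * 1 * 0 - 1 - 0 = -1 :> R) ?normrN1 //; ring.
Qed.

Lemma hh_ext o1 o1' o2 o2' : `|hh o1 o2 - hh o1' o2'| <= 2.
Proof.
apply: le_trans (ler_normB _ _) _.
by have := hh_bound o1 o2; have := hh_bound o1' o2'; lra.
Qed.

Lemma un_dd o : un o + dd o = 1.
Proof. by rewrite /un /dd; case: o => [a|] /=; rewrite ?addr0 ?add0r. Qed.

Lemma ee_update i o o' :
  ee i (update o o') = ee i o * ee i o' + ee i o * un o' + un o * ee i o'.
Proof.
rewrite /ee /un; case: o => [a|]; case: o' => [b|] /=;
  rewrite ?mulr0 ?mul0r ?addr0 ?add0r ?mul1r ?mulr1 //.
case: (eqVneq a b) => [<-|hab]; first by case: (Some a == Some i); rewrite ?mulr1 ?mul0r.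
rewrite /=; case: (Some a =P Some i) => [[ha]|_]; last by rewrite mul0r.
case: (Some b =P Some i) => [[hb]|_]; last by rewrite mulr0.
by rewrite ha hb eqxx in hab.
Qed.

Lemma dd_update_le a o' : 1 - dd (update (Some a) o') <= dd o'.
Proof.
rewrite /dd; case: o' => [b|] /=; last by rewrite subrr.
by case: (a == b) => /=; rewrite ?subrr ?subr0.
Qed.

Lemma dd_ge0 o : 0 <= dd o. Proof. by rewrite /dd; case: o. Qed.
Lemma dd_le1 o : dd o <= 1. Proof. by rewrite /dd; case: o. Qed.
Lemma ee_ge0 i o : 0 <= ee i o. Proof. by rewrite /ee; case: (_ == _). Qed.
Lemma un_ge0 o : 0 <= un o. Proof. by rewrite /un; case: o. Qed.

Lemma update_idem (o : opinion k) : update o o = o.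
Proof. by case: o => [a|] //=; rewrite eqxx. Qed.

Lemma update_Nr (o : opinion k) : update o None = o.
Proof. by case: o. Qed.

End Opinions.

Section Sums.
Variables (R : realType) (k : nat).

Lemma hh_sum (X : finType) (a b : X -> opinion k) :
  \sum_p \sum_q hh R (a p) (b q) =
  2 * (\sum_p dd R (a p)) * (\sum_q dd R (b q)) - (\sum_p dd R (a p)) * #|X|%:R
  - \sum_i (\sum_p ee R i (a p)) * (\sum_q ee R i (b q)).
Proof.
have inner p : \sum_q hh R (a p) (b q) = 2 * dd R (a p) * (\sum_q dd R (b q))
   - dd R (a p) * #|X|%:R - \sum_i ee R i (a p) * (\sum_q ee R i (b q)).
  rewrite /hh !sumrB -mulr_sumr sumJ_const; congr (_ - _ - _).
  by rewrite exchange_big /=; apply: eq_bigr => i _; rewrite mulr_sumr.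
rewrite (eq_bigr _ (fun p _ => inner p)) !sumrB.
congr (_ - _ - _).
- by rewrite -!mulr_suml -mulr_sumr.
- by rewrite -mulr_suml.
- rewrite exchange_big /=; apply: eq_bigr => i _; by rewrite mulr_suml.
Qed.
End Sums.

Section Psi.
Variables (R : realType) (V : finType) (k : nat).
Hypothesis hV : (0 < #|V|)%N.
Implicit Types (c : config V k).

Lemma nV_gt0 : 0 < nV R V.
Proof. by rewrite /nV ltr0n. Qed.
Lemma nV_neq0 : nV R V != 0.
Proof. by rewrite gt_eqF // nV_gt0. Qed.

Lemma alphaE c i : alpha R c i = (\sum_v ee R i (c v)) / nV R V.
Proof.
rewrite /alpha; congr (_ / _).
rewrite cardsE -card_sumR; apply: eq_bigr => v _.
rewrite /ee; case: (c v) => [a|] /= //; rewrite (_ : (Some a == Some i) = (a == i)) //; by case: (a == i).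
Qed.

Lemma betaE c : beta R c = (\sum_v dd R (c v)) / nV R V.
Proof.
rewrite /beta (eq_bigr _ (fun i _ => alphaE c i)) -mulr_suml exchange_big /=.
by congr (_ / _); apply: eq_bigr => v _; rewrite sum_ee.
Qed.

Lemma gammaE c : gamma R c =
  (\sum_i (\sum_v ee R i (c v)) * (\sum_v ee R i (c v))) / (nV R V) ^+ 2.
Proof.
rewrite /gamma mulr_suml; apply: eq_bigr => i _.
by rewrite alphaE; field; rewrite nV_neq0.
Qed.

Lemma psi_hh c : psi R c = (\sum_v \sum_w hh R (c v) (c w)) / (nV R V) ^+ 2.
Proof.
rewrite hh_sum /psi betaE gammaE -/(nV R V).
by field; rewrite nV_neq0.
Qed.

End Psi.


Lemma alg1 (R : realType) (k : nat) (N : 'I_k -> R) (r : R) :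
  (forall i, 0 <= N i) -> 0 <= r ->
  2 * (\sum_i (N i * N i + 2 * r * N i)) * (\sum_i (N i * N i + 2 * r * N i))
   - (\sum_i (N i * N i + 2 * r * N i)) * (r + \sum_i N i) ^+ 2
   - \sum_i (N i * N i + 2 * r * N i) * (N i * N i + 2 * r * N i) <= 0.
Proof.
move=> hN hr.
set K := fun i => N i * N i + 2 * r * N i.
have hK i : 0 <= K i by rewrite /K; have := hN i; nra.
rewrite -/(K _).
set M := \sum_i K i; set Bs := \sum_i N i; set G := \sum_i N i * N i.
have hM : M = G + 2 * r * Bs.
  by rewrite /M /K big_split /= mulr_sumr.
have hS i : \sum_j N j * (N j - N i) = G - Bs * N i.
  by rewrite (eq_bigr _ (fun j _ => mulrBr (N j) (N j) (N i))) sumrB mulr_suml.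
have hD i : 2 * M - K i - (r + Bs) ^+ 2
    = - (r - Bs + N i) ^+ 2 + 2 * \sum_j N j * (N j - N i).
  by rewrite hS hM /K; ring.
have E : 2 * M * M - M * (r + Bs) ^+ 2 - \sum_i K i * K i
    = \sum_i K i * (2 * M - K i - (r + Bs) ^+ 2).
  rewrite [RHS](eq_bigr (fun i => K i * (2 * M) - K i * K i - K i * (r + Bs) ^+ 2));
    last by move=> i _; ring.
  by rewrite /= !sumrB -!mulr_suml -/M; ring.
rewrite E (eq_bigr _ (fun i _ => congr1 (fun z => K i * z) (hD i))).
have hX : \sum_i \sum_j K i * (N j * (N j - N i)) <= 0.
  have h2 : 2 * (\sum_i \sum_j K i * (N j * (N j - N i)))
      = \sum_i \sum_j (- (N i * N j * (N i - N j) ^+ 2)).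
    rewrite mulr2n mulrDl mul1r.
    rewrite [X in _ + X = _]exchange_big /= -big_split /=.
    apply: eq_bigr => i _; rewrite -big_split /=; apply: eq_bigr => j _.
    by rewrite /K; ring.
  have : 2 * (\sum_i \sum_j K i * (N j * (N j - N i))) <= 0.
    rewrite h2; apply: sumr_le0 => i _; apply: sumr_le0 => j _.
    rewrite oppr_le0; apply: mulr_ge0; [apply: mulr_ge0|apply: sqr_ge0]; exact: hN.
  lra.
apply: (@le_trans _ _ (2 * \sum_i \sum_j K i * (N j * (N j - N i)))); last lra.
rewrite mulr_sumr; apply: ler_sum => i _.
rewrite mulrDr.
have h1 : K i * - (r - Bs + N i) ^+ 2 <= 0.
  by rewrite mulrN oppr_le0 mulr_ge0 // sqr_ge0.
have h2 : K i * (2 * \sum_j N j * (N j - N i)) = 2 * \sum_j K i * (N j * (N j - N i)).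
  by rewrite mulrCA [in LHS]mulr_sumr.
lra.
Qed.

Section Mean.
Variables (R : realType) (V : finType) (k : nat).
Hypothesis hV : (0 < #|V|)%N.
Variable c : config V k.

Local Notation n := (nV R V).
Definition U (v x : V) : opinion k := update (c v) (c x).

Lemma sum_prod2 (X Y : finType) (a : X -> R) (b : Y -> R) :
  \sum_v \sum_x a v * b x = (\sum_v a v) * (\sum_x b x).
Proof. by rewrite mulr_suml; apply: eq_bigr => v _; rewrite mulr_sumr. Qed.

Lemma pair_avg (phi : V -> V -> R) v w : v != w ->
  n ^+ 2 * \sum_(f : choice V) phi (f v) (f w) = NN R V V * \sum_x \sum_y phi x y.
Proof.
move=> hvw.
have h1 : n * \sum_(f : choice V) phi (f v) (f w) = \sum_(f : choice V) \sum_y phi y (f w).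
  rewrite /nV -(@sum_upd R V V predT v (fun f => phi (f v) (f w))) //.
  apply: eq_bigr => f _; apply: eq_bigr => y _.
  by rewrite upd_same upd_other // eq_sym.
have h2 y : n * \sum_(f : choice V) phi y (f w) = NN R V V * \sum_z phi y z.
  by rewrite /nV (@sum_coord R V V predT w (phi y)).
rewrite expr2 -mulrA h1 exchange_big mulr_sumr mulr_sumr.
by apply: eq_bigr => y _; rewrite h2.
Qed.


Definition T (v w : V) : R := \sum_x \sum_y hh R (U v x) (U w y).
Definition Bc : R := \sum_x dd R (c x).
Definition Nc (i : 'I_k) : R := \sum_x ee R i (c x).
Definition rc : R := \sum_x un R (c x).

Lemma n_split : n = rc + \sum_i Nc i.
Proof.
rewrite /nV -[X in X = _]mul1r -sumJ_const /rc /Nc exchange_big -big_split /=.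
by apply: eq_bigr => x _; rewrite sum_ee un_dd.
Qed.

Lemma Bc_split : Bc = \sum_i Nc i.
Proof. by rewrite /Bc /Nc exchange_big; apply: eq_bigr => x _; rewrite sum_ee. Qed.

Lemma T1_le0 : \sum_v \sum_w T v w <= 0.
Proof.
have -> : \sum_v \sum_w T v w =
    \sum_(p : V * V) \sum_(q : V * V) hh R (U p.1 p.2) (U q.1 q.2).
  rewrite -(pair_bigA _ (fun v x => \sum_(q : V * V) hh R (U v x) (U q.1 q.2))) /=.
  apply: eq_bigr => v _; rewrite /T exchange_big /=.
  by apply: eq_bigr => x _; rewrite (pair_bigA _ (fun w y => hh R (U v x) (U w y))).
rewrite hh_sum.
have hK i : \sum_(p : V * V) ee R i (U p.1 p.2) = Nc i * Nc i + 2 * rc * Nc i.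
  rewrite -(pair_bigA _ (fun v x => ee R i (U v x))) /=.
  under eq_bigr do under eq_bigr do rewrite /U ee_update.
  rewrite (eq_bigr (fun v => \sum_x (ee R i (c v) * ee R i (c x)) +
                              \sum_x (ee R i (c v) * un R (c x)) +
                              \sum_x (un R (c v) * ee R i (c x)))); last first.
    by move=> v _; rewrite -!big_split.
  rewrite !big_split /= !sum_prod2 -/(Nc i) -/rc; ring.
have hM : \sum_(p : V * V) dd R (U p.1 p.2) = \sum_i (Nc i * Nc i + 2 * rc * Nc i).
  rewrite -(eq_bigr _ (fun i _ => hK i)) exchange_big /=.
  by apply: eq_bigr => p _; rewrite sum_ee.
have hcard : (#|{: V * V}|%:R : R) = n ^+ 2 by rewrite card_prod natrM expr2.
rewrite hcard hM (eq_bigr _ (fun i _ => congr2 (fun a b => a * b) (hK i) (hK i))) n_split.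
apply: alg1 => [i|]; last by apply: sumr_ge0 => x _; exact: un_ge0.
by apply: sumr_ge0 => x _; exact: ee_ge0.
Qed.


Lemma Bc_ge0 : 0 <= Bc.
Proof. by apply: sumr_ge0 => x _; exact: dd_ge0. Qed.

Lemma T2_bound v : - T v v <= n * Bc.
Proof.
rewrite /T hh_sum -/(nV R V).
set m := \sum_x dd R (U v x).
set kk := fun i => \sum_x ee R i (U v x).
have hm : m = \sum_i kk i.
  by rewrite /m /kk exchange_big; apply: eq_bigr => x _; rewrite sum_ee.
have hk0 i : 0 <= kk i by apply: sumr_ge0 => x _; exact: ee_ge0.
have hkm i : kk i <= m.
  rewrite hm (bigD1 i) //= lerDl; apply: sumr_ge0 => j _; exact: hk0.
have hsq : \sum_i kk i * kk i <= m * m.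
  rewrite {1}hm mulr_suml; apply: ler_sum => i _; by apply: ler_wpM2l.
have hm0 : 0 <= m by apply: sumr_ge0 => x _; exact: dd_ge0.
have hmn : m <= n.
  rewrite /m /nV -[X in _ <= X]mul1r -sumJ_const; apply: ler_sum => x _; exact: dd_le1.
have hB0 := Bc_ge0.
suff hmB : m * (n - m) <= n * Bc by nra.
case hv: (c v) => [a|].
- have hnm : n - m <= Bc.
    rewrite /m /nV -[X in X - _ <= _]mul1r -sumJ_const -sumrB /Bc; apply: ler_sum => x _.
    by rewrite /U hv; exact: dd_update_le.
  nra.
- have -> : m = Bc by rewrite /m /Bc; apply: eq_bigr => x _; rewrite /U hv.
  nra.
Qed.

Lemma mean_bound :
  (\sum_(f : choice V) psi R (step c f)) / NN R V V <= beta R c / n.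
Proof.
have hn := nV_gt0 R hV.
have hNN := NN_gt0 R V hV.
rewrite (eq_bigr _ (fun f _ => psi_hh R hV (step c f))) -mulr_suml.
have E1 : \sum_(f : choice V) \sum_v \sum_w hh R (step c f v) (step c f w)
    = \sum_v \sum_w \sum_(f : choice V) hh R (U v (f v)) (U w (f w)).
  rewrite exchange_big; apply: eq_bigr => v _; rewrite exchange_big.
  by apply: eq_bigr => w _; apply: eq_bigr => f _; rewrite !ffunE.
have E2 v w : n ^+ 2 * \sum_(f : choice V) hh R (U v (f v)) (U w (f w))
    = NN R V V * (T v w - (v == w)%:R * T v v).
  case: (eqVneq v w) => [<-|ne].
    by rewrite big1 ?mulr0 ?mul1r ?subrr ?mulr0 // => f _; rewrite hh_diag.
  by rewrite mul0r subr0 (@pair_avg (fun x y => hh R (U v x) (U w y)) v w ne).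
have E3 : n ^+ 2 * \sum_v \sum_w \sum_(f : choice V) hh R (U v (f v)) (U w (f w))
    = NN R V V * (\sum_v \sum_w T v w - \sum_v T v v).
  rewrite mulr_sumr -sumrB mulr_sumr; apply: eq_bigr => v _.
  rewrite mulr_sumr (eq_bigr _ (fun w _ => E2 v w)) -mulr_sumr sumrB.
  congr (_ * (_ - _)).
  rewrite (bigD1 v) //= eqxx mul1r big1 ?addr0 // => w hw.
  by rewrite eq_sym (negbTE hw) mul0r.
have hT1 := T1_le0.
have hT2 : - \sum_v T v v <= n * n * Bc.
  rewrite -sumrN (_ : n * n * Bc = \sum_(v : V) (n * Bc)); last first.
    by rewrite sumJ_const /nV; ring.
  by apply: ler_sum => v _; apply: T2_bound.
rewrite E1 betaE // -/Bc.
set S := \sum_v \sum_w \sum_(f : choice V) _.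
have hS : S = NN R V V * (\sum_v \sum_w T v w - \sum_v T v v) / n ^+ 2.
  by rewrite -E3 /S; field; rewrite gt_eqF.
rewrite hS.
set A := \sum_v \sum_w T v w in hT1 *.
set Bt := \sum_v T v v in hT2 *.
have -> : NN R V V * (A - Bt) / n ^+ 2 / n ^+ 2 / NN R V V = (A - Bt) / n ^+ 4.
  by field; rewrite !gt_eqF.
rewrite ler_pdivrMr ?exprn_gt0 //.
have -> : Bc / n / n * n ^+ 4 = n * n * Bc by field; rewrite gt_eqF.
lra.
Qed.

End Mean.


Section Bern.
Variables (R : realType) (V : finType) (k : nat).
Hypothesis hV : (0 < #|V|)%N.
Variable c : config V k.
Local Notation n := (nV R V).

Lemma psi_lip (a b : config V k) u : (forall v, v != u -> a v = b v) ->
  `|psi R a - psi R b| <= 4 / n.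
Proof.
move=> hab.
have hn := nV_gt0 R hV.
rewrite !psi_hh // -mulrBl -sumrB.
rewrite normrM (gtr0_norm (_ : 0 < (n ^+ 2)^-1)); last by rewrite invr_gt0 exprn_gt0.
rewrite ler_pdivrMr ?exprn_gt0 //.
apply: le_trans (ler_norm_sum _ _ _) _.
apply: (@le_trans _ _ (\sum_v \sum_w (2 * (v == u)%:R + 2 * (w == u)%:R))).
  apply: ler_sum => v _; rewrite -sumrB; apply: le_trans (ler_norm_sum _ _ _) _.
  apply: ler_sum => w _.
  case: (eqVneq v u) => [->|hv]; case: (eqVneq w u) => [->|hw] /=;
    rewrite ?mulr1 ?mulr0 ?addr0 ?add0r; try exact: hh_ext.
  - by apply: le_trans (hh_ext R _ _ _ _) _; lra.
  - by rewrite (hab v hv) (hab w hw) subrr normr0.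
have hone : \sum_(w : V) (w == u)%:R = 1 :> R.
  by rewrite (@card_sumR R V (pred1 u)) card1.
have hin v : \sum_(w : V) (2 * (v == u)%:R + 2 * (w == u)%:R) = 2 * (v == u)%:R * n + 2.
  by rewrite big_split /= sumJ_const -mulr_sumr hone mulr1.
rewrite (eq_bigr _ (fun v _ => hin v)) big_split /= -mulr_suml -mulr_sumr hone sumJ_const.
rewrite (_ : 4 / n * n ^+ 2 = 4 * n); last by field; rewrite gt_eqF.
rewrite /nV; lra.
Qed.



Lemma mgf_bound lam : `|lam| * (24 / n) < 3 ->
  (\sum_(f : choice V) expR (lam * (psi R (step c f)
        - (\sum_(g : choice V) psi R (step c g)) / NN R V V))) / NN R V V
  <= expR ((lam ^+ 2 * (400 * beta R c / n) / 2) / (1 - `|lam| * (24 / n) / 3)).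
Proof.
move=> hlam.
have hn := nV_gt0 R hV.
pose S := fun (u : V) (x : V) => update (c u) (c x) == c u.
have hSd : forall u, S u u by move=> u; rewrite /S update_idem.
have hG : forall (f : {ffun V -> V}) u x y,
    `|psi R (step c (upd f u x)) - psi R (step c (upd f u y))| <= 4 / n.
  move=> f u x y; apply: (psi_lip (u := u)) => v hv.
  by rewrite !ffunE (negbTE hv).
have hGS : forall (f : {ffun V -> V}) u x, S u x ->
    psi R (step c (upd f u x)) = psi R (step c (upd f u u)).
  move=> f u x /eqP hx; congr (psi R _); apply/ffunP => v; rewrite !ffunE.
  case: (eqVneq v u) => [->|hv]; first by rewrite hx update_idem.
  by [].
have hl : `|lam| * (4 / n) <= 1 / 2.
  have : `|lam| * (24 / n) = 6 * (`|lam| * (4 / n)) by field; rewrite gt_eqF.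
  lra.
have := @mgf_bd R V V hV (fun f => psi R (step c f)) S (fun u => u) (4 / n) lam hSd hG hGS hl.
move/le_trans; apply.
rewrite ler_expR.
set Bc := \sum_x dd R (c x).
have hB0 : 0 <= Bc by apply: sumr_ge0 => x _; exact: dd_ge0.
have hp : \sum_u #|[predC S u]|%:R / #|V|%:R <= Bc.
  rewrite -mulr_suml ler_pdivrMr; last exact: hn.
  rewrite (_ : Bc * #|V|%:R = \sum_(u : V) Bc); last first.
    by rewrite sumJ_const.
  apply: ler_sum => u _.
  rewrite -card_sumR /Bc; apply: ler_sum => x _.
  rewrite /S /= unfold_in /=.
  case hx: (c x) => [a|]; first by rewrite /dd; case: (_ == _).
  by rewrite update_Nr eqxx.
rewrite betaE -/Bc.
set q := 1 - `|lam| * (24 / n) / 3.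
have hq0 : 0 < q by rewrite /q; lra.
have h24 : 0 <= 24 / n by apply: divr_ge0 => //; apply: ltW.
have hq1 : q <= 1 by rewrite /q; have := normr_ge0 lam; nra.
have hl2 : 0 <= lam ^+ 2 by exact: sqr_ge0.
apply: (@le_trans _ _ (32 * lam ^+ 2 * Bc / n ^+ 2)).
  rewrite (_ : 2 * lam ^+ 2 * (4 / n) ^+ 2 = 32 * lam ^+ 2 / n ^+ 2); last by field; rewrite gt_eqF.
  rewrite mulrAC ler_pdivrMr ?exprn_gt0 // mulrAC divfK ?gt_eqF ?exprn_gt0 //.
  set P := \sum_u _ in hp *; nra.
rewrite ler_pdivlMr // .
have -> : lam ^+ 2 * (400 * (Bc / n) / n) / 2 = 200 * lam ^+ 2 * Bc / n ^+ 2 by field; rewrite gt_eqF.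
set Z := lam ^+ 2 * Bc / n ^+ 2.
have hZ : 0 <= Z by rewrite /Z; apply: divr_ge0; [apply: mulr_ge0|apply: sqr_ge0].
have -> : 32 * lam ^+ 2 * Bc / n ^+ 2 = 32 * Z by rewrite /Z; field; rewrite gt_eqF.
have -> : 200 * lam ^+ 2 * Bc / n ^+ 2 = 200 * Z by rewrite /Z; field; rewrite gt_eqF.
nra.
Qed.

End Bern.


Section Reduce.
Variables (R : realType) (V : finType) (k : nat).
Variable c0 : config V k.

Lemma opn_upd s (w : Omega V s.+1) g j : (j <= s)%N ->
  opn c0 (upd w ord_max g) j = opn c0 w j.
Proof.
elim: j => [//|j IH] hj /=.
rewrite IH ?(ltnW hj) //.
case: insubP => [i _ hi|_] //.
rewrite ffunE (_ : (i == ord_max) = false) //.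
by apply/negbTE; rewrite -(inj_eq val_inj) /= hi neq_ltn hj.
Qed.

Lemma opn_last s (w : Omega V s.+1) : opn c0 w s.+1 = step (opn c0 w s) (w ord_max).
Proof.
rewrite /=; case: insubP => [i _ hi|]; last by rewrite ltnSn.
by congr step; congr (w _); apply: val_inj.
Qed.

Lemma condE_ext s (w : Omega V s.+1) (X1 X2 : Omega V s.+1 -> R) :
  (forall w', X1 w' = X2 w') -> condE c0 s X1 w = condE c0 s X2 w.
Proof. by move=> h; rewrite /condE; congr (_ / _); apply: eq_bigr. Qed.

Lemma condE_red s (w : Omega V s.+1) (Y : config V k -> choice V -> R) :
  condE c0 s (fun w' => Y (opn c0 w' s) (w' ord_max)) w
  = (\sum_(f : choice V) Y (opn c0 w s) f) / #|choice V|%:R.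
Proof.
rewrite /condE.
set A := atom c0 s w.
have hA w' : w' \in A -> opn c0 w' s = opn c0 w s.
  by rewrite inE => /forallP /(_ ord_max) /eqP.
have hinv w' g : ((upd w' ord_max g) \in A) = (w' \in A).
  by rewrite !inE; apply: eq_forallb => j; rewrite opn_upd // -ltnS ltn_ord.
rewrite (eq_bigr (fun w' : Omega V s.+1 => Y (opn c0 w s) (w' ord_max))); last by move=> w' /hA ->.
have := @sum_coord R 'I_s.+1 (choice V) (fun x => x \in A) ord_max (Y (opn c0 w s)) hinv.
have hcard : #|(fun x => x \in A) : pred (Omega V s.+1)| = #|A| by apply: eq_card.
rewrite hcard => hs.
have hwA : w \in A by rewrite inE; apply/forallP.
have hA0 : 0 < #|A|%:R :> R by rewrite ltr0n; apply/card_gt0P; exists w.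
have hC0 : 0 < #|choice V|%:R :> R.
  by rewrite ltr0n; apply/card_gt0P; exists (w ord_max).
apply: (@mulfI _ (#|choice V|%:R * #|A|%:R)); first by rewrite mulf_neq0 // gt_eqF.
move: hs; set L := \sum_(i | _) _; set Rr := \sum_f _ => hs.
set Cn := #|choice V|%:R in hC0 hs *; set An := #|A|%:R in hA0 hs *.
have -> : Cn * An * (L / An) = Cn * L by field; rewrite gt_eqF.
have -> : Cn * An * (Rr / Cn) = An * Rr by field; rewrite gt_eqF.
exact: hs.
Qed.
End Reduce.

Unset Implicit Arguments.

Theorem mainTheorem8 (R : realType) (V : finType) (k : nat)
  (hV : (0 < #|V|)%N) (c0 : config V k) (t : nat) (ht : (1 <= t)%N) :
  let psi_t := fun w : Omega V t => psi R (opn c0 w t) in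
  let beta_prev := fun w : Omega V t => beta R (opn c0 w t.-1) in
  let E := fun (X : Omega V t -> R) => condE c0 t.-1 X in
  (forall w : Omega V t, E psi_t w <= beta_prev w / nV R V) /\
  (forall w : Omega V t,
     bernstein (24 / nV R V) (400 * beta_prev w / nV R V)
       (fun lam => E (fun w' => expR (lam * (psi_t w' - E psi_t w'))) w)).
Proof.
case: t ht => [//|s] _ psi_t beta_prev E /=.
have hpsi w' : psi_t w' = psi R (step (opn c0 w' s) (w' ord_max)).
  by rewrite /psi_t opn_last.
have EP w : E psi_t w = (\sum_(f : choice V) psi R (step (opn c0 w s) f)) / #|choice V|%:R.
  rewrite /E /= (condE_ext _ _ hpsi).
  exact: (condE_red c0 w (fun c f => psi R (step c f))).
split=> w.
  rewrite EP /beta_prev /=; exact: mean_bound.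
move=> lam hlam.
rewrite /E /=.
pose Y := fun (c : config V k) (f : choice V) => expR (lam * (psi R (step c f)
     - (\sum_(g : choice V) psi R (step c g)) / #|choice V|%:R)).
rewrite (condE_ext _ _ (X2 := fun w' => Y (opn c0 w' s) (w' ord_max))); last first.
  by move=> w'; rewrite hpsi -/(E psi_t w') EP.
rewrite (condE_red c0 w Y) /Y /beta_prev /=.
exact: mgf_bound.
Qed.
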